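(* Let $f_1=k_1\in\mathbb R\setminus\{0\}$, let $f_2=f_2(x^1)$ be a smooth nowhere-vanishing function depending only on $x^1$, let $f_3=k_3\in\mathbb R\setminus\{0\}$, and $g=\frac{1}{k_1^2}dx^1\otimes dx^1+\frac{1}{f_2^2}dx^2\otimes dx^2+\frac{1}{k_3^2}dx^3\otimes dx^3$. Let $F_0$ satisfy $F_0'=-\frac{f_2^2}{k_1}$. Then $V=\sum_{k=1}^3V^kE_k$, with $E_i=f_i\frac{\partial}{\partial x^i}$, is a Killing vector field of $(\mathbb R^3,g)$ if and only if one of the following holds: (i) $V^1=0$, $V^2(x^1)=\frac{c_1}{f_2(x^1)}$, $V^3=c_2$, with $c_1,c_2\in\mathbb R$; (ii) $f_2=k_2$ is constant and $V^1(x^2,x^3)=c_1x^2+c_2x^3+c_3$, $V^2(x^1,x^3)=-\frac{c_1k_2}{k_1}x^1-c_4k_2x^3+c_5$, $V^3(x^1,x^2)=-\frac{c_2k_3}{k_1}x^1+c_4k_3x^2+c_6$, with $c_1,\dots,c_6\in\mathbb R$; (iii) $f_2(x^1)=a_1e^{a_2x^1}$ with $a_1,a_2\in\mathbb R\setminus\{0\}$, and $V^1(x^2)=c_1x^2+c_2$, $V^2(x^1,x^2)=k_1\left(\frac{f_2'}{f_2^2}\right)(x^1)\left[\frac{c_1}{2}(x^2)^2+c_2x^2+c_3\right]+\frac{c_1F_0(x^1)+c_4}{f_2(x^1)}$, $V^3=c_3$, with $c_1,\dots,c_4\in\mathbb R$; (iv) the function $k:=\frac{k_1^2}{f_2^2}\left(\frac{f_2'}{f_2}\right)'$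 is a constant in $(0,+\infty)$, and $V^1(x^2)=c_1\cos(\sqrt{k}x^2)+c_2\sin(\sqrt{k}x^2)$, $V^2(x^1,x^2)=k_1\left(\frac{f_2'}{f_2^2}\right)(x^1)\left[\frac{1}{\sqrt{k}}\big(c_1\sin(\sqrt{k}x^2)-c_2\cos(\sqrt{k}x^2)\big)+c_3\right]+\frac{c_3kF_0(x^1)+c_4}{f_2(x^1)}$, $V^3=c_3$, with $c_1,\dots,c_4\in\mathbb R$; (v) the function $k:=\frac{k_1^2}{f_2^2}\left(\frac{f_2'}{f_2}\right)'$ is a constant in $(-\infty,0)$, and $V^1(x^2)=c_1e^{\sqrt{-k}x^2}+c_2e^{-\sqrt{-k}x^2}$, $V^2(x^1,x^2)=k_1\left(\frac{f_2'}{f_2^2}\right)(x^1)\left[\frac{1}{\sqrt{-k}}\big(c_1e^{\sqrt{-k}x^2}-c_2e^{-\sqrt{-k}x^2}\big)+c_3\right]+\frac{c_3kF_0(x^1)+c_4}{f_2(x^1)}$, $V^3=c_3$, with $c_1,\dots,c_4\in\mathbb R$.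
   Context: $x^1,x^2,x^3$ are the standard coordinates on $\mathbb R^3$; a prime denotes the derivative with respect to $x^1$; $V^k$ are smooth functions and writing $h(x^i)$ or $h(x^i,x^j)$ means $h$ depends only on those variables. A vector field $V$ is Killing if $\mathcal L_Vg=0$. *)

(* Defs.v *)
From Stdlib Require Import Reals.
From Coquelicot Require Import Coquelicot.
Open Scope R_scope.

Inductive idx := i1 | i2 | i3.

Definition fn3 := R -> R -> R -> R.

Definition partial (i : idx) (f : fn3) : fn3 := fun x y z =>
  match i with
  | i1 => Derive (fun t => f t y z) x
  | i2 => Derive (fun t => f x t z) y
  | i3 => Derive (fun t => f x y t) z
  end.

Definition ex_partial (i : idx) (f : fn3) (x y z : R) : Prop :=
  match i with
  | i1 => ex_derive (fun t => f t y z) x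
  | i2 => ex_derive (fun t => f x t z) y
  | i3 => ex_derive (fun t => f x y t) z
  end.

Definition continuous3 (f : fn3) : Prop :=
  forall x y z : R,
    continuous (fun p : R * R * R => f (fst (fst p)) (snd (fst p)) (snd p)) (x, y, z).

Fixpoint Ck (n : nat) (f : fn3) : Prop :=
  match n with
  | O => continuous3 f
  | S m => continuous3 f /\ (forall i x y z, ex_partial i f x y z)
           /\ (forall i, Ck m (partial i f))
  end.

Definition smooth3 (f : fn3) : Prop := forall n, Ck n f.

Definition smooth1 (f : R -> R) : Prop := forall n x, ex_derive_n f n x.

Definition sum3 (F : idx -> R) : R := F i1 + F i2 + F i3.

Definition lie_deriv (g : idx -> idx -> fn3) (W : idx -> fn3) (i j : idx) : fn3 :=
  fun x y z => sum3 (fun k =>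
      W k x y z * partial k (g i j) x y z
    + g k j x y z * partial i (W k) x y z
    + g i k x y z * partial j (W k) x y z).

Definition Killing (g : idx -> idx -> fn3) (W : idx -> fn3) : Prop :=
  forall i j x y z, lie_deriv g W i j x y z = 0.

Definition metric_g (k1 k3 : R) (f2 : R -> R) : idx -> idx -> fn3 :=
  fun i j => match i, j with
  | i1, i1 => fun _ _ _ => 1 / k1 ^ 2
  | i2, i2 => fun x _ _ => 1 / (f2 x) ^ 2
  | i3, i3 => fun _ _ _ => 1 / k3 ^ 2
  | _, _ => fun _ _ _ => 0
  end.

(* Coordinate components of V = V^1 E_1 + V^2 E_2 + V^3 E_3, E_i = f_i d/dx^i,
   with f_1 = k1, f_2 = f2(x^1), f_3 = k3. *)
Definition frame_field (k1 k3 : R) (f2 : R -> R) (V1 V2 V3 : fn3) : idx -> fn3 :=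
  fun k => match k with
  | i1 => fun x y z => k1 * V1 x y z
  | i2 => fun x y z => f2 x * V2 x y z
  | i3 => fun x y z => k3 * V3 x y z
  end.

(* Main.v *)
Require Import Defs.
From Stdlib Require Import Reals Lra Psatz Classical.
From Coquelicot Require Import Coquelicot.
Open Scope R_scope.

Lemma D_inv2 (f2 : R -> R) x : ex_derive f2 x -> f2 x <> 0 ->
  Derive (fun t => 1 / (f2 t * (f2 t * 1))) x = - 2 * Derive f2 x / (f2 x)^3.
Proof. intros. apply is_derive_unique. auto_derive.
  - split; [exact H|split;[exact H|split;[|exact I]]].
    rewrite Rmult_1_r. apply Rmult_integral_contrapositive_currified; auto.
  - change (fun x0 : R => f2 x0) with f2. field. auto. Qed.

Definition eqs (k1 k3 : R) (f2 : R -> R) (V1 V2 V3 : fn3) := forall x y z,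
 Derive (fun t => V1 t y z) x = 0 /\ Derive (V3 x y) z = 0 /\
 Derive (fun t => V2 x t z) y = k1 * V1 x y z * Derive f2 x / (f2 x)^2 /\
 Derive (fun t => f2 t * V2 t y z) x = - ((f2 x)^2 / k1) * Derive (fun t => V1 x t z) y /\
 Derive (fun t => V3 t y z) x = - (k3/k1) * Derive (V1 x y) z /\
 Derive (V2 x y) z = - (f2 x / k3) * Derive (fun t => V3 x t z) y.

Ltac simp_lie Hd := unfold lie_deriv, sum3, metric_g, frame_field, partial; simpl;
  rewrite ?Derive_const, ?Hd, ?Derive_scal.

Lemma lin_solve a b c e : c <> 0 -> c * (a - b) = e -> e = 0 -> a = b.
Proof. intros Hc H1 H2. rewrite H2 in H1. apply Rmult_integral in H1. destruct H1; lra. Qed.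

Lemma nz2 a : a <> 0 -> 2 * / a <> 0.
Proof. intros. apply Rmult_integral_contrapositive_currified. lra. now apply Rinv_neq_0_compat. Qed.
Lemma nzi a : a <> 0 -> / a <> 0.
Proof. intros. now apply Rinv_neq_0_compat. Qed.
Lemma nzi2 a : a <> 0 -> / (a^2) <> 0.
Proof. intros. apply Rinv_neq_0_compat. now apply pow_nonzero. Qed.

Lemma killing_iff k1 k3 f2 V1 V2 V3 : k1 <> 0 -> k3 <> 0 ->
  (forall x, ex_derive f2 x) -> (forall x, f2 x <> 0) ->
  (Killing (metric_g k1 k3 f2) (frame_field k1 k3 f2 V1 V2 V3) <-> eqs k1 k3 f2 V1 V2 V3).
Proof.
  intros Hk1 Hk3 Hf Hnz. 
  assert (Hd : forall x, Derive (fun t => 1 / (f2 t * (f2 t * 1))) x = - 2 * Derive f2 x / (f2 x)^3)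
    by (intros; apply D_inv2; auto).
  split.
  - intros HK x y z.
    pose proof (HK i1 i1 x y z) as E11. pose proof (HK i2 i2 x y z) as E22.
    pose proof (HK i3 i3 x y z) as E33. pose proof (HK i1 i2 x y z) as E12.
    pose proof (HK i1 i3 x y z) as E13. pose proof (HK i2 i3 x y z) as E23.
    revert E11 E22 E33 E12 E13 E23. simp_lie Hd. intros.
    specialize (Hnz x).
    repeat split.
    + refine (lin_solve _ _ (2 * / k1) _ (nz2 _ Hk1) _ E11). field. auto.
    + refine (lin_solve _ _ (2 * / k3) _ (nz2 _ Hk3) _ E33). field. auto.
    + refine (lin_solve _ _ (2 * / f2 x) _ (nz2 _ Hnz) _ E22). field. auto.
    + refine (lin_solve _ _ (/ (f2 x ^2)) _ (nzi2 _ Hnz) _ E12). field. auto.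
    + refine (lin_solve _ _ (/ k3) _ (nzi _ Hk3) _ E13). field. auto.
    + refine (lin_solve _ _ (/ f2 x) _ (nzi _ Hnz) _ E23). field. auto.
  - intros HE i j x y z. destruct (HE x y z) as (A1 & A2 & A3 & A4 & A5 & A6).
    specialize (Hnz x).
    destruct i, j; simp_lie Hd; rewrite ?A1, ?A2, ?A3, ?A4, ?A5, ?A6; field; auto.
Qed.

Lemma const0 (f : R -> R) : (forall t, is_derive f t 0) -> forall t, f t = f 0.
Proof. intros H t. destruct (Rtotal_order t 0) as [h|[h|h]].
 - apply (eq_is_derive f t 0). intros s _. apply H. exact h.
 - rewrite h. reflexivity.
 - symmetry. apply (eq_is_derive f 0 t). intros s _. apply H. exact h. Qed.

Lemma der_uniq (f : R -> R) x a b : is_derive f x a -> is_derive f x b -> a = b.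
Proof. intros H1 H2. apply is_derive_unique in H1. apply is_derive_unique in H2. congruence. Qed.

Definition sm3 (V : fn3) := (forall x y z, ex_derive (fun t : R => V t y z) x) /\
  (forall x y z, ex_derive (fun t : R => V x t z) y) /\ (forall x y z, ex_derive (V x y) z).

Lemma sm_ex V : smooth3 V -> sm3 V.
Proof. intros H. destruct (H 1%nat) as [_ [H1 _]].
  split; [|split]; intros x y z; [exact (H1 i1 x y z)|exact (H1 i2 x y z)|exact (H1 i3 x y z)]. Qed.

Lemma ex_f2 f2 : smooth1 f2 -> forall x, ex_derive f2 x.
Proof. intros H x. exact (H 1%nat x). Qed.
Lemma ex_f2' f2 : smooth1 f2 -> forall x, ex_derive (Derive f2) x.
Proof. intros H x. exact (H 2%nat x). Qed.

Lemma neq_mult a b : a <> 0 -> b <> 0 -> a * b <> 0.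
Proof. intros. now apply Rmult_integral_contrapositive_currified. Qed.

Lemma Derive_eta (f : R -> R) x : Derive (fun y : R => f y) x = Derive f x.
Proof. reflexivity. Qed.
Lemma isD_eta (f : R -> R) x l : is_derive f x l -> Derive (fun y : R => f y) x = l.
Proof. apply is_derive_unique. Qed.
Lemma isD (f : R -> R) x l : is_derive f x l -> Derive f x = l.
Proof. apply is_derive_unique. Qed.
Ltac rwD H := first [rewrite (isD_eta _ _ _ H) | rewrite (isD _ _ _ H)].
Lemma ex_derive_extR (f g : R -> R) x : (forall t, f t = g t) -> ex_derive f x -> ex_derive g x.
Proof. apply ex_derive_ext. Qed.
Lemma is_derive_extR (f g : R -> R) x l : (forall t, f t = g t) -> is_derive f x l -> is_derive g x l.
Proof. apply is_derive_ext. Qed.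
Lemma exR_minus (f g : R -> R) x : ex_derive f x -> ex_derive g x -> ex_derive (fun t => f t - g t) x.
Proof. intros. auto_derive. auto. Qed.
Lemma exR_scal (f : R -> R) c x : ex_derive f x -> ex_derive (fun t => c * f t) x.
Proof. intros. auto_derive. auto. Qed.
Lemma exR_mult (f g : R -> R) x : ex_derive f x -> ex_derive g x -> ex_derive (fun t => f t * g t) x.
Proof. intros. auto_derive. auto. Qed.
Lemma isR_minus (f g : R -> R) x a b : is_derive f x a -> is_derive g x b -> is_derive (fun t => f t - g t) x (a - b).
Proof. intros. auto_derive. repeat split; try exact I; eexists; eauto. rwD H; rwD H0. ring. Qed.
Lemma isR_plus (f g : R -> R) x a b : is_derive f x a -> is_derive g x b -> is_derive (fun t => f t + g t) x (a + b).
Proof. intros. auto_derive. repeat split; try exact I; eexists; eauto. rwD H; rwD H0. ring. Qed.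
Lemma isR_scal (f : R -> R) c x a : is_derive f x a -> is_derive (fun t => c * f t) x (c * a).
Proof. intros. auto_derive. eexists; eauto. rwD H. ring. Qed.
Lemma isR_aff (f : R -> R) c K x a : is_derive f x a -> is_derive (fun t => (f t - c) * K) x (a * K).
Proof. intros. auto_derive. eexists; eauto. rwD H. ring. Qed.
Lemma mid0 a b c : a <> 0 -> c <> 0 -> a * b * c = 0 -> b = 0.
Proof. intros Ha Hc H. apply Rmult_integral in H. destruct H as [H|H]; [|contradiction].
  apply Rmult_integral in H. destruct H; [contradiction|auto]. Qed.
Lemma final_form k1 k D2x f2x F0x Gy c0 C b M : f2x <> 0 -> k <> 0 -> k1 <> 0 ->
  k1 * (D2x / f2x) + k * F0x = M ->
  k1 * (D2x / f2x ^ 2) * (Gy + c0 / k) + (c0 * F0x + C) / f2x =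
  k1 * (D2x / f2x ^ 2) * (Gy + b) + (b * k * F0x + (C + (c0 / k - b) * M)) / f2x.
Proof. intros. rewrite <- H2. field. auto. Qed.
Lemma neg_ratio' k : k <> 0 -> -2 / k <> 0.
Proof. intros Hk H. assert (-2 = (-2 / k) * k) by (field; auto). rewrite H in H0. lra. Qed.
Lemma isD_eq (f : R -> R) x a b : is_derive f x a -> a = b -> is_derive f x b.
Proof. intros H E; subst; exact H. Qed.
Ltac feq := try match goal with |- @eq _ ?a ?b => change (@eq R a b) end.
Lemma DscalR (f : R -> R) k x : Derive (fun s : R => k * f s) x = k * Derive f x.
Proof. apply Derive_scal. Qed.
Lemma isR_const (c x : R) : is_derive (fun _ : R => c) x 0.
Proof. exact (is_derive_const c x). Qed.

Ltac side := repeat split; try exact I; try (eexists; eauto; fail); try (solve [eauto]).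

Lemma ode_cos (g g1 : R -> R) k : 0 < k ->
  (forall y, is_derive g y (g1 y)) -> (forall y, is_derive g1 y (- k * g y)) ->
  g 0 = 0 -> g1 0 = 0 -> forall y, g y = 0.
Proof.
  intros Hk Hg Hg1 H0 H1 y.
  assert (HE : forall t, is_derive (fun t => g1 t ^ 2 + k * g t ^ 2) t 0).
  { intros t. auto_derive. side.
    rwD (Hg t); rwD (Hg1 t). ring. }
  pose proof (const0 _ HE y) as C. simpl in C. rewrite H0, H1 in C.
  assert (g y * g y = 0) by nra. nra.
Qed.

Lemma ode_exp (g g1 : R -> R) s : 0 < s ->
  (forall y, is_derive g y (g1 y)) -> (forall y, is_derive g1 y (s * s * g y)) ->
  g 0 = 0 -> g1 0 = 0 -> forall y, g y = 0.
Proof.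
  intros Hs Hg Hg1 H0 H1.
  assert (HU : forall t, is_derive (fun t => (g1 t - s * g t) * exp (s * t)) t 0).
  { intros t. auto_derive. side.
    rwD (Hg t); rwD (Hg1 t). ring. }
  assert (Hu : forall t, g1 t = s * g t).
  { intros t. pose proof (const0 _ HU t) as C. simpl in C. rewrite H0, H1 in C.
    pose proof (exp_pos (s * t)). nra. }
  assert (HV : forall t, is_derive (fun t => g t * exp (- (s * t))) t 0).
  { intros t. auto_derive. side.
    rwD (Hg t); rewrite Hu. ring. }
  intros y. pose proof (const0 _ HV y) as C. simpl in C. rewrite H0 in C.
  pose proof (exp_pos (- (s * y))). nra.
Qed.

Definition RHS (k1 k3 : R) (f2 F0 : R -> R) (V1 V2 V3 : fn3) : Prop :=
   (exists c1 c2 : R, forall x y z,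
      V1 x y z = 0 /\ V2 x y z = c1 / f2 x /\ V3 x y z = c2)
   \/
   (exists k2 : R, (forall x, f2 x = k2) /\
    exists c1 c2 c3 c4 c5 c6 : R, forall x y z,
      V1 x y z = c1 * y + c2 * z + c3 /\
      V2 x y z = - (c1 * k2 / k1) * x - c4 * k2 * z + c5 /\
      V3 x y z = - (c2 * k3 / k1) * x + c4 * k3 * y + c6)
   \/
   (exists a1 a2 : R, a1 <> 0 /\ a2 <> 0 /\ (forall x, f2 x = a1 * exp (a2 * x)) /\
    exists c1 c2 c3 c4 : R, forall x y z,
      V1 x y z = c1 * y + c2 /\
      V2 x y z = k1 * (Derive f2 x / (f2 x) ^ 2) * (c1 / 2 * y ^ 2 + c2 * y + c3)
                 + (c1 * F0 x + c4) / f2 x /\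
      V3 x y z = c3)
   \/
   (exists k : R, 0 < k /\
    (forall x, k1 ^ 2 / (f2 x) ^ 2 * Derive (fun t => Derive f2 t / f2 t) x = k) /\
    exists c1 c2 c3 c4 : R, forall x y z,
      V1 x y z = c1 * cos (sqrt k * y) + c2 * sin (sqrt k * y) /\
      V2 x y z = k1 * (Derive f2 x / (f2 x) ^ 2)
                   * (/ sqrt k * (c1 * sin (sqrt k * y) - c2 * cos (sqrt k * y)) + c3)
                 + (c3 * k * F0 x + c4) / f2 x /\
      V3 x y z = c3)
   \/
   (exists k : R, k < 0 /\
    (forall x, k1 ^ 2 / (f2 x) ^ 2 * Derive (fun t => Derive f2 t / f2 t) x = k) /\
    exists c1 c2 c3 c4 : R, forall x y z,
      V1 x y z = c1 * exp (sqrt (- k) * y) + c2 * exp (- (sqrt (- k) * y)) /\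
      V2 x y z = k1 * (Derive f2 x / (f2 x) ^ 2)
                   * (/ sqrt (- k) * (c1 * exp (sqrt (- k) * y) - c2 * exp (- (sqrt (- k) * y))) + c3)
                 + (c3 * k * F0 x + c4) / f2 x /\
      V3 x y z = c3).

Lemma neg_ratio a b : a <> 0 -> b <> 0 -> - (a / b) <> 0.
Proof. intros Ha Hb H. apply Ha. replace a with (- (a/b) * - b) by (feq; field; auto). rewrite H; feq; ring. Qed.

Lemma forward k1 k3 f2 F0 V1 V2 V3 : k1 <> 0 -> k3 <> 0 ->
  (forall x, ex_derive f2 x) -> (forall x, ex_derive (Derive f2) x) -> (forall x, f2 x <> 0) ->
  (forall x, is_derive F0 x (- (f2 x) ^ 2 / k1)) ->
  sm3 V1 -> sm3 V2 -> sm3 V3 -> eqs k1 k3 f2 V1 V2 V3 -> RHS k1 k3 f2 F0 V1 V2 V3.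
Proof.
  intros Hk1 Hk3 Hf Hf' Hnz HF0 [P1 [P2 P3]] [Q1 [Q2 Q3]] [S1 [S2 S3]] HE.
  assert (HPx : forall x y z, V1 x y z = V1 0 y z).
  { intros x y z. refine (const0 (fun t : R => V1 t y z) _ x). intros t.
    destruct (HE t y z) as [E _]. rewrite <- E. apply Derive_correct, P1. }
  assert (HSz : forall x y z, V3 x y z = V3 x y 0).
  { intros x y z. refine (const0 (V3 x y) _ z). intros t.
    destruct (HE x y t) as (_&E&_). rewrite <- E. apply Derive_correct, S3. }
  assert (Hnk := neg_ratio _ _ Hk3 Hk1).
  assert (H3P : forall y z, Derive (V1 0 y) z = Derive (V1 0 y) 0).
  { intros y z. destruct (HE 0 y z) as (_&_&_&_&E&_). destruct (HE 0 y 0) as (_&_&_&_&E'&_).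
    assert (Derive (fun t : R => V3 t y z) 0 = Derive (fun t : R => V3 t y 0) 0) as D by (apply Derive_ext; intros; apply HSz).
    rewrite D, E' in E. symmetry; exact (Rmult_eq_reg_l _ _ _ E Hnk). }
  pose (al := fun y => Derive (V1 0 y) 0).
  pose (ga := fun y => V1 0 y 0).
  assert (HP : forall x y z, V1 x y z = al y * z + ga y).
  { intros x y z. rewrite HPx.
    assert (C : V1 0 y z - al y * z = V1 0 y 0 - al y * 0).
    { refine (const0 (fun t : R => V1 0 y t - al y * t) _ z). intros t.
      auto_derive. side; try apply P3. rwD (Derive_correct _ _ (P3 0 y t)). rewrite H3P. unfold al. feq; ring. }
    unfold ga. lra. }
  clear HPx H3P.
  assert (HS0 : forall x y, Derive (fun t : R => V3 t y 0) x = - (k3/k1) * al y).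
  { intros x y. destruct (HE x y 0) as (_&_&_&_&E&_). rewrite E. f_equal.
    apply Derive_ext. intros t. rewrite !HP. reflexivity. }
  pose (be := fun y => V3 0 y 0).
  assert (HS : forall x y z, V3 x y z = - (k3/k1) * al y * x + be y).
  { intros x y z. rewrite HSz.
    assert (C : V3 x y 0 + (k3/k1) * al y * x = V3 0 y 0 + (k3/k1) * al y * 0).
    { refine (const0 (fun t : R => V3 t y 0 + (k3/k1) * al y * t) _ x). intros t.
      replace 0 with (Derive (fun t : R => V3 t y 0) t + (k3/k1) * al y * 1) at 1 by (rewrite HS0; field; auto).
      apply (is_derive_plus (fun t : R => V3 t y 0) (fun t : R => (k3/k1) * al y * t)). apply Derive_correct, S1.
      auto_derive; side; feq; ring. }
    unfold be. lra. }
  clear HSz HS0.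
  assert (Hbe : forall y, ex_derive be y) by (intros; exact (S2 0 y 0)).
  assert (Hga : forall y, ex_derive ga y) by (intros; exact (P2 0 y 0)).
  assert (Hal : forall y, ex_derive al y).
  { intros y. apply (ex_derive_extR (fun t : R => k1/k3*(V3 0 t 0 - V3 1 t 0))).
    - intros t; cbv beta. rewrite (HS 1 t 0). unfold be. feq; field; auto.
    - apply exR_scal, exR_minus; apply S2. }
  assert (HSd : forall x y z, Derive (fun t : R => V3 x t z) y = - (k3/k1) * Derive al y * x + Derive be y).
  { intros x y z. rewrite (Derive_ext _ (fun t : R => - (k3/k1) * al t * x + be t)) by (intros; apply HS).
    apply is_derive_unique. auto_derive. side. rwD (Derive_correct _ _ (Hal y)). rwD (Derive_correct _ _ (Hbe y)). feq; ring. }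
  assert (HPd : forall x y z, Derive (fun t : R => V1 x t z) y = Derive al y * z + Derive ga y).
  { intros x y z. rewrite (Derive_ext _ (fun t : R => al t * z + ga t)) by (intros; apply HP).
    apply is_derive_unique. auto_derive. side. rwD (Derive_correct _ _ (Hal y)). rwD (Derive_correct _ _ (Hga y)). feq; ring. }
  pose (A := fun x y => Derive al y * x / k1 - Derive be y / k3).
  assert (HQz : forall x y z, Derive (V2 x y) z = f2 x * A x y).
  { intros x y z. destruct (HE x y z) as (_&_&_&_&_&E). rewrite E, HSd. unfold A. feq; field; auto. }
  assert (HQ : forall x y z, V2 x y z = f2 x * A x y * z + V2 x y 0).
  { intros x y z. 
    assert (C : V2 x y z - f2 x * A x y * z = V2 x y 0 - f2 x * A x y * 0).
    { refine (const0 (fun t : R => V2 x y t - f2 x * A x y * t) _ z). intros t.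
      auto_derive. side; try apply Q3. rwD (Derive_correct _ _ (Q3 x y t)). rewrite HQz. feq; ring. }
    lra. }
  clear HQz.
  assert (HA2 : forall x y, is_derive (fun t : R => f2 x * A x t) y (k1 * al y * Derive f2 x / f2 x ^ 2)).
  { intros x y. apply (is_derive_extR (fun t : R => V2 x t 1 - V2 x t 0)).
    - intros t; cbv beta. rewrite (HQ x t 1). feq; ring.
    - replace (k1 * al y * Derive f2 x / f2 x ^ 2) with
        (Derive (fun t : R => V2 x t 1) y - Derive (fun t : R => V2 x t 0) y).
      + apply isR_minus; apply Derive_correct, Q2.
      + destruct (HE x y 1) as (_&_&E1&_). destruct (HE x y 0) as (_&_&E0&_).
        rewrite E1, E0, !HP. feq; field; auto. }
  assert (HA1 : forall x y, is_derive (fun t : R => f2 t * (f2 t * A t y)) x (- (f2 x ^ 2 / k1) * Derive al y)).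
  { intros x y. apply (is_derive_extR (fun t : R => f2 t * V2 t y 1 - f2 t * V2 t y 0)).
    - intros t; cbv beta. rewrite (HQ t y 1). feq; ring.
    - replace (- (f2 x ^ 2 / k1) * Derive al y) with
        (Derive (fun t : R => f2 t * V2 t y 1) x - Derive (fun t : R => f2 t * V2 t y 0) x).
      + apply isR_minus; apply Derive_correct, exR_mult; auto.
      + destruct (HE x y 1) as (_&_&_&E1&_). destruct (HE x y 0) as (_&_&_&E0&_).
        rewrite E1, E0, !HPd. feq; field; auto. }
  assert (Heq : forall x y, 2 * f2 x * Derive f2 x * A x y + f2 x ^ 2 * Derive al y / k1
                           = - (f2 x ^ 2 / k1) * Derive al y).
  { intros x y. symmetry. apply (der_uniq _ _ _ _ (HA1 x y)). unfold A. auto_derive. side.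
    rwD (Derive_correct _ _ (Hf x)). feq; field; auto. }
  assert (Hal0 : forall y, Derive al y = 0).
  { intros y. destruct (Req_dec (Derive al y) 0) as [h|h]; auto. exfalso.
    pose (x0 := k1 * Derive be y / (k3 * Derive al y)).
    assert (HA0 : A x0 y = 0) by (unfold A, x0; field; repeat split; assumption).
    assert (E : f2 x0 ^ 2 * Derive al y * (2 / k1) = 0).
    { replace (f2 x0 ^ 2 * Derive al y * (2 / k1)) with
        ((2 * f2 x0 * Derive f2 x0 * A x0 y + f2 x0 ^ 2 * Derive al y / k1) - (-(f2 x0 ^ 2 / k1) * Derive al y))
        by (rewrite HA0; field; auto).
      rewrite Heq; feq; ring. }
    revert E. apply neq_mult; [apply neq_mult; [apply pow_nonzero; auto | auto] | apply (nz2 _ Hk1)]. }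
  assert (Halc : forall y, al y = al 0).
  { apply const0. intros t. rewrite <- (Hal0 t). apply Derive_correct, Hal. }
  assert (HD2be : forall x y, Derive f2 x * Derive be y = 0).
  { intros x y. pose proof (Heq x y) as E. unfold A in E. rewrite Hal0 in E.
    apply (mid0 (f2 x) _ (-2 / k3)); auto.
    - apply neg_ratio'; auto.
    - replace (f2 x * (Derive f2 x * Derive be y) * (-2 / k3)) with
        ((2 * f2 x * Derive f2 x * (0 * x / k1 - Derive be y / k3) + f2 x ^ 2 * 0 / k1) - (-(f2 x ^ 2 / k1) * 0))
        by (feq; field; auto).
      rewrite E; feq; ring. }
  clear Heq HA1.
  destruct (classic (exists x1, Derive f2 x1 <> 0)) as [[x1 Hx1] | Hno].
  2: {
  assert (HD0 : forall x, Derive f2 x = 0).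
  { intros x. destruct (Req_dec (Derive f2 x) 0); auto. exfalso; apply Hno; eauto. }
  assert (Hk2 : forall x, f2 x = f2 0).
  { apply const0. intros t. rewrite <- (HD0 t). apply Derive_correct, Hf. }
  assert (Hf20 := Hnz 0).
  assert (Hbe' : forall y, Derive be y = Derive be 0).
  { intros y. 
    assert (C : f2 0 * A 0 y = f2 0 * A 0 0).
    { refine (const0 (fun t : R => f2 0 * A 0 t) _ y). intros t.
      apply (isD_eq _ _ _ _ (HA2 0 t)). feq. rewrite HD0. feq; field; auto. }
    unfold A in C. rewrite !Hal0 in C.
    apply (Rmult_eq_reg_l (- f2 0 / k3)).
    - replace (- f2 0 / k3 * Derive be y) with (f2 0 * (0 * 0 / k1 - Derive be y / k3)) by (feq; field; auto).
      rewrite C. feq; field; auto.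
    - intro H. apply Hf20. replace (f2 0) with (- (- f2 0 / k3) * k3) by (feq; field; auto). rewrite H; feq; ring. }
  assert (Hbel : forall y, be y = Derive be 0 * y + be 0).
  { intros y. assert (C : be y - Derive be 0 * y = be 0 - Derive be 0 * 0).
    { refine (const0 (fun t : R => be t - Derive be 0 * t) _ y). intros t.
      auto_derive. side. rwD (Derive_correct _ _ (Hbe t)). rewrite Hbe'. feq; ring. }
    lra. }
  assert (HQ0 : forall x y, V2 x y 0 = V2 x 0 0).
  { intros x. apply (const0 (fun t : R => V2 x t 0)). intros t.
    apply (isD_eq _ _ _ _ (Derive_correct _ _ (Q2 x t 0))). feq.
    destruct (HE x t 0) as (_&_&E&_). rewrite E, HD0. feq; field; auto. }
  assert (Hga' : forall y, Derive ga y = Derive ga 0).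
  { intros y. destruct (HE 0 y 0) as (_&_&_&E&_). destruct (HE 0 0 0) as (_&_&_&E'&_).
    rewrite HPd in E, E'.
    rewrite (Derive_ext _ (fun t : R => f2 t * V2 t 0 0)) in E by (intros; rewrite HQ0; auto).
    rewrite E' in E. apply (Rmult_eq_reg_l (- (f2 0 ^ 2 / k1))).
    - replace (- (f2 0 ^ 2 / k1) * Derive ga y) with (- (f2 0 ^ 2 / k1) * (Derive al y * 0 + Derive ga y)) by (feq; ring).
      rewrite <- E. feq; ring.
    - apply neg_ratio; auto. apply pow_nonzero; auto. }
  assert (Hgal : forall y, ga y = Derive ga 0 * y + ga 0).
  { intros y. assert (C : ga y - Derive ga 0 * y = ga 0 - Derive ga 0 * 0).
    { refine (const0 (fun t : R => ga t - Derive ga 0 * t) _ y). intros t.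
      auto_derive. side. rwD (Derive_correct _ _ (Hga t)). rewrite Hga'. feq; ring. }
    lra. }
  assert (HQ00 : forall x, V2 x 0 0 = - (f2 0 / k1) * Derive ga 0 * x + V2 0 0 0).
  { intros x. assert (C : V2 x 0 0 + (f2 0 / k1) * Derive ga 0 * x = V2 0 0 0 + (f2 0 / k1) * Derive ga 0 * 0).
    { refine (const0 (fun t : R => V2 t 0 0 + (f2 0 / k1) * Derive ga 0 * t) _ x). intros t.
      replace 0 with (Derive (fun t : R => V2 t 0 0) t + (f2 0 / k1) * Derive ga 0 * 1) at 1.
      - apply isR_plus. apply Derive_correct, Q1. auto_derive; side; feq; ring.
      - destruct (HE t 0 0) as (_&_&_&E&_). rewrite HPd in E.
        rewrite (Derive_ext _ (fun s : R => f2 0 * V2 s 0 0)) in E by (intros; rewrite Hk2; auto).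
        rewrite DscalR, (Hk2 t) in E.
        feq. apply (Rmult_eq_reg_l (f2 0)); auto. rewrite Rmult_plus_distr_l, E. feq; field; auto. }
    lra. }
  right; left. exists (f2 0). split; [exact Hk2|].
  exists (Derive ga 0), (al 0), (ga 0), (Derive be 0 / k3), (V2 0 0 0), (be 0).
  intros x y z. split; [|split].
  - rewrite HP, (Halc y), Hgal. feq; ring.
  - rewrite HQ, HQ0, HQ00. unfold A. rewrite !Hal0, Hbe', (Hk2 x). feq; field; auto.
  - rewrite HS, (Halc y), Hbel. feq; field; auto. }
  assert (Hf1 := Hnz x1).
  assert (Hbe0 : forall y, Derive be y = 0).
  { intros y. pose proof (HD2be x1 y) as E. apply Rmult_integral in E. destruct E; [contradiction|auto]. }
  assert (Hbec : forall y, be y = be 0).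
  { apply const0. intros t. rewrite <- (Hbe0 t). apply Derive_correct, Hbe. }
  assert (HA0 : forall x y, A x y = 0) by (intros; unfold A; rewrite Hal0, Hbe0; feq; field; auto).
  assert (Ha0 : al 0 = 0).
  { assert (E : k1 * al 0 * Derive f2 x1 / f2 x1 ^ 2 = 0).
    { apply (der_uniq _ _ _ _ (HA2 x1 0)). apply (is_derive_extR (fun _ => 0)).
      - intros t. rewrite HA0. feq; ring.
      - apply isR_const. }
    apply (mid0 k1 _ (Derive f2 x1 / f2 x1 ^ 2)); auto.
    - unfold Rdiv. apply neq_mult; auto. apply Rinv_neq_0_compat, pow_nonzero; auto.
    - transitivity (k1 * al 0 * Derive f2 x1 / f2 x1 ^ 2); [feq; field; auto | exact E]. }
  assert (HP' : forall x y z, V1 x y z = ga y) by (intros; rewrite HP, Halc, Ha0; feq; ring).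
  assert (HS' : forall x y z, V3 x y z = be 0) by (intros; rewrite HS, Halc, Ha0, Hbec; feq; ring).
  assert (HQ' : forall x y z, V2 x y z = V2 x y 0) by (intros; rewrite HQ, HA0; feq; ring).
  clear HP HS HQ HA2 HD2be.
  assert (HR2 : forall x y, Derive (fun t : R => V2 x t 0) y = k1 * ga y * Derive f2 x / f2 x ^ 2).
  { intros x y. destruct (HE x y 0) as (_&_&E&_). rewrite E, HP'. reflexivity. }
  pose (Ga := fun y => (V2 x1 y 0 - V2 x1 0 0) * (f2 x1 ^ 2 / (k1 * Derive f2 x1))).
  assert (HG : forall y, is_derive Ga y (ga y)).
  { intros y. apply (isD_eq _ _ _ _ (isR_aff (fun t : R => V2 x1 t 0) (V2 x1 0 0) (f2 x1 ^ 2 / (k1 * Derive f2 x1)) y _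
       (Derive_correct _ _ (Q2 x1 y 0)))).
    feq. rewrite HR2. feq; field; auto. }
  assert (HG0 : Ga 0 = 0) by (unfold Ga; feq; ring).
  assert (HR : forall x y, V2 x y 0 = k1 * (Derive f2 x / f2 x ^ 2) * Ga y + V2 x 0 0).
  { intros x y. assert (C : V2 x y 0 - k1 * (Derive f2 x / f2 x ^ 2) * Ga y = V2 x 0 0 - k1 * (Derive f2 x / f2 x ^ 2) * Ga 0).
    { refine (const0 (fun t : R => V2 x t 0 - k1 * (Derive f2 x / f2 x ^ 2) * Ga t) _ y). intros t.
      apply (isD_eq _ _ _ _ (isR_minus _ _ _ _ _ (Derive_correct _ _ (Q2 x t 0)) (isR_scal _ _ _ _ (HG t)))).
      feq. rewrite HR2. feq; field; auto. }
    rewrite HG0 in C. lra. }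
  pose (L := fun t : R => Derive f2 t / f2 t).
  assert (HL : forall x, ex_derive L x).
  { intros x. unfold L. auto_derive. repeat split; auto. }
  pose (ps := fun t : R => f2 t * V2 t 0 0).
  assert (Hps : forall x, ex_derive ps x).
  { intros x. unfold ps. apply exR_mult; auto. }
  assert (Estar : forall x y, k1 * Derive L x * Ga y + Derive ps x = - (f2 x ^ 2 / k1) * Derive ga y).
  { intros x y. destruct (HE x y 0) as (_&_&_&E&_). rewrite HPd in E.
    rewrite (Derive_ext _ (fun t : R => k1 * L t * Ga y + ps t)) in E.
    - transitivity (-(f2 x ^ 2 / k1) * (Derive al y * 0 + Derive ga y)); [| feq; ring]. rewrite <- E. feq; symmetry. apply is_derive_unique. auto_derive. side.
      rwD (Derive_correct _ _ (HL x)). rwD (Derive_correct _ _ (Hps x)). feq; ring.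
    - intros t. rewrite HR. unfold L, ps. specialize (Hnz t). feq; field; auto. }
  assert (Hps' : forall x, Derive ps x = - (f2 x ^ 2 / k1) * Derive ga 0).
  { intros x. rewrite <- (Estar x 0), HG0. feq; ring. }
  assert (HKG : forall x y, (k1 ^ 2 / f2 x ^ 2 * Derive L x) * Ga y = Derive ga 0 - Derive ga y).
  { intros x y. pose proof (Estar x y) as E. rewrite Hps' in E. specialize (Hnz x).
    apply (Rmult_eq_reg_l (- (f2 x ^ 2 / k1))). 2: { apply neg_ratio; auto. apply pow_nonzero; auto. }
    replace (- (f2 x ^ 2 / k1) * (k1 ^ 2 / f2 x ^ 2 * Derive L x * Ga y)) with
       (- (k1 * Derive L x * Ga y)) by (feq; field; auto).
    feq. lra. }
  clear Estar.
  destruct (classic (exists y0, Ga y0 <> 0)) as [[y0 Hy0] | HnoG].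
  2: {
    assert (HG0' : forall y, Ga y = 0).
    { intros y. destruct (Req_dec (Ga y) 0); auto. exfalso; apply HnoG; eauto. }
    assert (Hga0 : forall y, ga y = 0).
    { intros y. symmetry. apply (der_uniq Ga y 0 (ga y)); [| apply HG].
      apply (is_derive_extR (fun _ => 0)); [intros; rewrite HG0'; reflexivity | apply isR_const]. }
    assert (Hgd0 : Derive ga 0 = 0).
    { apply is_derive_unique. apply (is_derive_extR (fun _ => 0)); [intros; rewrite Hga0; reflexivity | apply isR_const]. }
    assert (Hpsc : forall x, ps x = ps 0).
    { apply const0. intros t. apply (isD_eq _ _ _ _ (Derive_correct _ _ (Hps t))). feq.
      rewrite Hps', Hgd0. feq; ring. }
    left. exists (ps 0), (be 0). intros x y z. split; [|split].
    - rewrite HP'. apply Hga0.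
    - rewrite HQ', HR, HG0'. rewrite <- (Hpsc x). unfold ps. specialize (Hnz x). feq; field; auto.
    - apply HS'. }
  pose (k := (Derive ga 0 - Derive ga y0) / Ga y0).
  assert (HKc : forall x, k1 ^ 2 / f2 x ^ 2 * Derive L x = k).
  { intros x. unfold k. rewrite <- (HKG x y0). feq; field; auto. }
  assert (Hga'' : forall y, Derive ga y = Derive ga 0 - k * Ga y).
  { intros y. rewrite <- (HKc 0), (HKG 0 y). feq; ring. }
  assert (Hga1 : forall y, is_derive ga y (Derive ga y)) by (intros; apply Derive_correct, Hga).
  assert (Hga2 : forall y, is_derive (Derive ga) y (- k * ga y)).
  { intros y. apply (is_derive_extR (fun t : R => Derive ga 0 - k * Ga t)).
    - intros t. rewrite (Hga'' t). reflexivity.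
    - auto_derive. side. rwD (HG y). feq; ring. }
  assert (Hpsf : forall x, ps x = Derive ga 0 * F0 x + (ps 0 - Derive ga 0 * F0 0)).
  { intros x. assert (C : ps x - Derive ga 0 * F0 x = ps 0 - Derive ga 0 * F0 0).
    { refine (const0 (fun t : R => ps t - Derive ga 0 * F0 t) _ x). intros t.
      auto_derive. side. rwD (Derive_correct _ _ (Hps t)). rwD (HF0 t). rewrite Hps'. feq; field; auto. }
    lra. }
  pose (C := ps 0 - Derive ga 0 * F0 0).
  assert (HV2 : forall x y z, V2 x y z = k1 * (Derive f2 x / f2 x ^ 2) * Ga y + (Derive ga 0 * F0 x + C) / f2 x).
  { intros x y z. rewrite HQ', HR. specialize (Hnz x).
    assert (H : V2 x 0 0 = ps x / f2 x) by (unfold ps; feq; field; auto).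
    rewrite H, Hpsf. unfold C. feq; field; auto. }
  assert (HLd : forall x, Derive L x = k * f2 x ^ 2 / k1 ^ 2).
  { intros x. rewrite <- (HKc x). specialize (Hnz x). feq; field; auto. }
  assert (HM : forall x, k1 * L x + k * F0 x = k1 * L 0 + k * F0 0).
  { apply (const0 (fun t : R => k1 * L t + k * F0 t)). intros t.
    auto_derive. side. rwD (Derive_correct _ _ (HL t)). rwD (HF0 t). rewrite HLd. specialize (Hnz t). feq; field; auto. }
  destruct (Rtotal_order k 0) as [Hkn | [Hk0 | Hkp]].
  3: {
    pose (s := sqrt k).
    assert (Hs : s * s = k) by (apply sqrt_sqrt; lra).
    assert (Hs0 : 0 < s) by (apply sqrt_lt_R0; lra).
    pose (c1 := ga 0). pose (c2 := Derive ga 0 / s).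
    assert (Hgf : forall y, ga y = c1 * cos (s * y) + c2 * sin (s * y)).
    { intros y.
      assert (Z := ode_cos (fun y => ga y - (c1 * cos (s * y) + c2 * sin (s * y)))
                   (fun y => Derive ga y - (- c1 * s * sin (s * y) + c2 * s * cos (s * y))) k Hkp).
      cbv beta in Z.
      assert (ga y - (c1 * cos (s * y) + c2 * sin (s * y)) = 0).
      { apply Z.
        - intros t. auto_derive. side. rwD (Hga1 t). feq; ring.
        - intros t. auto_derive. side. rwD (Hga2 t). rewrite <- Hs. feq; ring.
        - rewrite Rmult_0_r, cos_0, sin_0. unfold c1. feq; ring.
        - rewrite Rmult_0_r, cos_0, sin_0. unfold c2. feq; field; lra. }
      lra. }
    assert (Hgd : forall y, Derive ga y = - c1 * s * sin (s * y) + c2 * s * cos (s * y)).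
    { intros y. rewrite (Derive_ext ga (fun t : R => c1 * cos (s * t) + c2 * sin (s * t)) y Hgf).
      apply is_derive_unique. auto_derive. side. feq; ring. }
    assert (HGf : forall y, Ga y = / s * (c1 * sin (s * y) - c2 * cos (s * y)) + Derive ga 0 / k).
    { intros y.
      assert (E : Ga y = (Derive ga 0 - Derive ga y) / k) by (rewrite (Hga'' y); feq; field; lra).
      rewrite E, (Hgd y). rewrite <- Hs. unfold c2. feq; field; lra. }
    right; right; right; left. exists k. split; [exact Hkp|]. split; [exact HKc|].
    exists c1, c2, (be 0), (C + (Derive ga 0 / k - be 0) * (k1 * L 0 + k * F0 0)).
    intros x y z. fold s. split; [|split].
    - rewrite HP'. apply Hgf.
    - rewrite HV2, HGf. apply final_form; auto. lra. exact (HM x).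
    - apply HS'. }
  2: {
    assert (HL0 : forall x, L x = L 0).
    { apply const0. intros t. apply (isD_eq _ _ _ _ (Derive_correct _ _ (HL t))). feq.
      rewrite HLd, Hk0. feq; field; auto. }
    pose (a2 := L 0).
    assert (Hf2L : forall x, Derive f2 x = a2 * f2 x).
    { intros x. unfold a2. rewrite <- (HL0 x). unfold L. specialize (Hnz x). feq; field; auto. }
    assert (Ha2 : a2 <> 0).
    { unfold a2. rewrite <- (HL0 x1). unfold L. unfold Rdiv. apply neq_mult; auto. apply Rinv_neq_0_compat; auto. }
    assert (Hexp : forall x, f2 x = f2 0 * exp (a2 * x)).
    { intros x. assert (C0 : f2 x * exp (- (a2 * x)) = f2 0 * exp (- (a2 * 0))).
      { refine (const0 (fun t : R => f2 t * exp (- (a2 * t))) _ x). intros t.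
        auto_derive. side. rwD (Derive_correct _ _ (Hf t)). rewrite Hf2L. feq; ring. }
      rewrite Rmult_0_r, Ropp_0, exp_0, Rmult_1_r in C0.
      rewrite <- C0, Rmult_assoc, <- exp_plus. replace (- (a2 * x) + a2 * x) with 0 by (feq; ring).
      rewrite exp_0, Rmult_1_r. reflexivity. }
    assert (Hgc : forall y, Derive ga y = Derive ga 0).
    { intros y. rewrite Hga'', Hk0. feq; ring. }
    assert (Hgl : forall y, ga y = Derive ga 0 * y + ga 0).
    { intros y. assert (C0 : ga y - Derive ga 0 * y = ga 0 - Derive ga 0 * 0).
      { refine (const0 (fun t : R => ga t - Derive ga 0 * t) _ y). intros t.
        auto_derive. side. rwD (Hga1 t). rewrite Hgc. feq; ring. }
      lra. }
    assert (HGl : forall y, Ga y = Derive ga 0 / 2 * y ^ 2 + ga 0 * y).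
    { intros y. assert (C0 : Ga y - (Derive ga 0 / 2 * y ^ 2 + ga 0 * y) = Ga 0 - (Derive ga 0 / 2 * 0 ^ 2 + ga 0 * 0)).
      { refine (const0 (fun t : R => Ga t - (Derive ga 0 / 2 * t ^ 2 + ga 0 * t)) _ y). intros t.
        auto_derive. side. rwD (HG t). rewrite Hgl. feq; field. }
      rewrite HG0 in C0. replace (0 - (Derive ga 0 / 2 * 0 ^ 2 + ga 0 * 0)) with 0 in C0 by (feq; ring).
      lra. }
    right; right; left. exists (f2 0), a2. split; [apply Hnz|]. split; [exact Ha2|]. split; [exact Hexp|].
    exists (Derive ga 0), (ga 0), (be 0), (C - k1 * a2 * be 0).
    intros x y z. split; [|split].
    - rewrite HP', Hgl. feq; ring.
    - rewrite HV2, HGl, Hf2L. specialize (Hnz x). feq; field; auto.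
    - apply HS'. }
  pose (s := sqrt (- k)).
  assert (Hs : s * s = - k) by (apply sqrt_sqrt; lra).
  assert (Hs0 : 0 < s) by (apply sqrt_lt_R0; lra).
  pose (c1 := (ga 0 + Derive ga 0 / s) / 2). pose (c2 := (ga 0 - Derive ga 0 / s) / 2).
  assert (Hgf : forall y, ga y = c1 * exp (s * y) + c2 * exp (- (s * y))).
  { intros y.
    assert (Z := ode_exp (fun y => ga y - (c1 * exp (s * y) + c2 * exp (- (s * y))))
                 (fun y => Derive ga y - (c1 * s * exp (s * y) - c2 * s * exp (- (s * y)))) s Hs0).
    cbv beta in Z.
    assert (ga y - (c1 * exp (s * y) + c2 * exp (- (s * y))) = 0).
    { apply Z.
      - intros t. auto_derive. side. rwD (Hga1 t). feq; ring.
      - intros t. auto_derive. side. rwD (Hga2 t). replace k with (- (s * s)) by lra. feq; ring.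
      - rewrite Rmult_0_r, Ropp_0, exp_0. unfold c1, c2. feq; field; lra.
      - rewrite Rmult_0_r, Ropp_0, exp_0. unfold c1, c2. feq; field; lra. }
    lra. }
  assert (Hgd : forall y, Derive ga y = c1 * s * exp (s * y) - c2 * s * exp (- (s * y))).
  { intros y. rewrite (Derive_ext ga (fun t : R => c1 * exp (s * t) + c2 * exp (- (s * t))) y Hgf).
    apply is_derive_unique. auto_derive. side. feq; ring. }
  assert (HGf : forall y, Ga y = / s * (c1 * exp (s * y) - c2 * exp (- (s * y))) + Derive ga 0 / k).
  { intros y.
    assert (E : Ga y = (Derive ga 0 - Derive ga y) / k) by (rewrite (Hga'' y); feq; field; lra).
    rewrite E, (Hgd y). replace k with (- (s * s)) by lra. feq; field; lra. }
  right; right; right; right. exists k. split; [exact Hkn|]. split; [exact HKc|].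
  exists c1, c2, (be 0), (C + (Derive ga 0 / k - be 0) * (k1 * L 0 + k * F0 0)).
  intros x y z. fold s. split; [|split].
  - rewrite HP'. apply Hgf.
  - rewrite HV2, HGf. apply final_form; auto. lra. exact (HM x).
  - apply HS'.
Qed.

From Stdlib Require Import FunctionalExtensionality.

Ltac nzs := rewrite ?Rmult_1_r; repeat apply neq_mult; auto; try (apply Rgt_not_eq, exp_pos).
Ltac sidec := repeat split; try exact I; try assumption; try (eexists; eauto; fail); try (solve [eauto]); try nzs.

Ltac comp_D := match goal with |- context [Derive ?f ?x] =>
  lazymatch f with (fun t => ?g t) => fail | (fun _ => _) => idtac | _ => fail end;
  let H := fresh in
  eassert (H : is_derive f x _); [ auto_derive; try reflexivity; sidec | rewrite (is_derive_unique _ _ _ H); clear H ] end.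

Lemma backward_i (k1 k3 : R) (f2 : R -> R) (V1 V2 V3 : fn3) : k1 <> 0 -> k3 <> 0 ->
  (forall x, ex_derive f2 x) -> (forall x, f2 x <> 0) ->
  (exists c1 c2 : R, forall x y z, V1 x y z = 0 /\ V2 x y z = c1 / f2 x /\ V3 x y z = c2) ->
  eqs k1 k3 f2 V1 V2 V3.
Proof.
  intros Hk1 Hk3 Hf Hnz [c1 [c2 H]].
  assert (E1 : V1 = fun x y z => 0) by (extensionality x; extensionality y; extensionality z; apply H).
  assert (E2 : V2 = fun x y z => c1 / f2 x) by (extensionality x; extensionality y; extensionality z; apply H).
  assert (E3 : V3 = fun x y z => c2) by (extensionality x; extensionality y; extensionality z; apply H).
  subst. intros x y z. cbv beta. repeat comp_D. 
  specialize (Hnz x).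
  repeat split; feq; field; auto.
Qed.

Ltac ext3 H := extensionality x; extensionality y; extensionality z; apply H.

Lemma backward_ii (k1 k3 : R) (f2 : R -> R) (V1 V2 V3 : fn3) : k1 <> 0 -> k3 <> 0 -> (forall x, f2 x <> 0) ->
   (exists k2 : R, (forall x, f2 x = k2) /\
    exists c1 c2 c3 c4 c5 c6 : R, forall x y z,
      V1 x y z = c1 * y + c2 * z + c3 /\
      V2 x y z = - (c1 * k2 / k1) * x - c4 * k2 * z + c5 /\
      V3 x y z = - (c2 * k3 / k1) * x + c4 * k3 * y + c6) ->
  eqs k1 k3 f2 V1 V2 V3.
Proof.
  intros Hk1 Hk3 Hnz [k2 [Hf2 [c1 [c2 [c3 [c4 [c5 [c6 H]]]]]]]].
  assert (Hk2 : k2 <> 0) by (rewrite <- (Hf2 0); auto).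
  assert (E0 : f2 = fun _ => k2) by (extensionality x; apply Hf2).
  assert (E1 : V1 = fun x y z => c1 * y + c2 * z + c3) by ext3 H.
  assert (E2 : V2 = fun x y z => - (c1 * k2 / k1) * x - c4 * k2 * z + c5) by ext3 H.
  assert (E3 : V3 = fun x y z => - (c2 * k3 / k1) * x + c4 * k3 * y + c6) by ext3 H.
  subst. intros x y z. cbv beta. repeat comp_D.
  repeat split; feq; field; auto.
Qed.

Lemma backward_iii (k1 k3 : R) (f2 F0 : R -> R) (V1 V2 V3 : fn3) : k1 <> 0 -> k3 <> 0 ->
  (forall x, is_derive F0 x (- (f2 x) ^ 2 / k1)) ->
   (exists a1 a2 : R, a1 <> 0 /\ a2 <> 0 /\ (forall x, f2 x = a1 * exp (a2 * x)) /\
    exists c1 c2 c3 c4 : R, forall x y z,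
      V1 x y z = c1 * y + c2 /\
      V2 x y z = k1 * (Derive f2 x / (f2 x) ^ 2) * (c1 / 2 * y ^ 2 + c2 * y + c3)
                 + (c1 * F0 x + c4) / f2 x /\
      V3 x y z = c3) ->
  eqs k1 k3 f2 V1 V2 V3.
Proof.
  intros Hk1 Hk3 HF0 [a1 [a2 [Ha1 [Ha2 [Hf2 [c1 [c2 [c3 [c4 H]]]]]]]]].
  assert (E0 : f2 = fun x => a1 * exp (a2 * x)) by (extensionality x; apply Hf2).
  assert (HD : forall t, Derive f2 t = a2 * f2 t).
  { intros t. rewrite E0. apply is_derive_unique. auto_derive. exact I. feq; ring. }
  assert (E1 : V1 = fun x y z => c1 * y + c2) by ext3 H.
  assert (E2 : V2 = fun x y z => k1 * (a2 * f2 x / (f2 x) ^ 2) * (c1 / 2 * y ^ 2 + c2 * y + c3)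
                 + (c1 * F0 x + c4) / f2 x).
  { extensionality x; extensionality y; extensionality z. rewrite <- HD. apply H. }
  assert (E3 : V3 = fun x y z => c3) by ext3 H.
  subst. intros x y z. cbv beta. repeat comp_D.
  rewrite (isD_eta _ _ _ (HF0 x)).
  pose proof (exp_pos (a2 * x)).
  repeat split; feq; field; repeat split; auto; apply Rgt_not_eq, exp_pos.
Qed.

Lemma backward_iv (k1 k3 : R) (f2 F0 : R -> R) (V1 V2 V3 : fn3) : k1 <> 0 -> k3 <> 0 ->
  (forall x, ex_derive f2 x) -> (forall x, ex_derive (Derive f2) x) -> (forall x, f2 x <> 0) ->
  (forall x, is_derive F0 x (- (f2 x) ^ 2 / k1)) ->
   (exists k : R, 0 < k /\
    (forall x, k1 ^ 2 / (f2 x) ^ 2 * Derive (fun t => Derive f2 t / f2 t) x = k) /\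
    exists c1 c2 c3 c4 : R, forall x y z,
      V1 x y z = c1 * cos (sqrt k * y) + c2 * sin (sqrt k * y) /\
      V2 x y z = k1 * (Derive f2 x / (f2 x) ^ 2)
                   * (/ sqrt k * (c1 * sin (sqrt k * y) - c2 * cos (sqrt k * y)) + c3)
                 + (c3 * k * F0 x + c4) / f2 x /\
      V3 x y z = c3) ->
  eqs k1 k3 f2 V1 V2 V3.
Proof.
  intros Hk1 Hk3 Hf Hf' Hnz HF0 [k [Hk [HK [c1 [c2 [c3 [c4 H]]]]]]].
  assert (E1 : V1 = fun x y z => c1 * cos (sqrt k * y) + c2 * sin (sqrt k * y)) by ext3 H.
  assert (E2 : V2 = fun x y z => k1 * (Derive f2 x / (f2 x) ^ 2)
                   * (/ sqrt k * (c1 * sin (sqrt k * y) - c2 * cos (sqrt k * y)) + c3)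
                 + (c3 * k * F0 x + c4) / f2 x) by ext3 H.
  assert (E3 : V3 = fun x y z => c3) by ext3 H.
  subst V1 V2 V3. clear H.
  assert (Hs : sqrt k * sqrt k = k) by (apply sqrt_sqrt; lra).
  assert (Hs0 : 0 < sqrt k) by (apply sqrt_lt_R0; lra).
  set (s := sqrt k) in *. clearbody s. subst k.
  intros x y z. cbv beta. pose proof (HK x) as HKx. revert HKx. repeat comp_D. intro HKx.
  specialize (Hnz x).
  try rewrite (isD_eta _ _ _ (HF0 x)).
  rewrite ?(isD_eta _ _ _ (Derive_correct _ _ (Hf x))) in HKx |- *.
  rewrite ?(isD_eta _ _ _ (Derive_correct _ _ (Hf' x))) in HKx |- *.
  assert (EDD : Derive (Derive f2) x = (s * s * f2 x ^ 4 / k1 ^ 2 + Derive f2 x * Derive f2 x) / f2 x).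
  { rewrite <- HKx. feq; field; auto. }
  try rewrite EDD.
  repeat split; feq; field; repeat split; auto; lra.
Qed.

Lemma backward_v (k1 k3 : R) (f2 F0 : R -> R) (V1 V2 V3 : fn3) : k1 <> 0 -> k3 <> 0 ->
  (forall x, ex_derive f2 x) -> (forall x, ex_derive (Derive f2) x) -> (forall x, f2 x <> 0) ->
  (forall x, is_derive F0 x (- (f2 x) ^ 2 / k1)) ->
   (exists k : R, k < 0 /\
    (forall x, k1 ^ 2 / (f2 x) ^ 2 * Derive (fun t => Derive f2 t / f2 t) x = k) /\
    exists c1 c2 c3 c4 : R, forall x y z,
      V1 x y z = c1 * exp (sqrt (- k) * y) + c2 * exp (- (sqrt (- k) * y)) /\
      V2 x y z = k1 * (Derive f2 x / (f2 x) ^ 2)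
                   * (/ sqrt (- k) * (c1 * exp (sqrt (- k) * y) - c2 * exp (- (sqrt (- k) * y))) + c3)
                 + (c3 * k * F0 x + c4) / f2 x /\
      V3 x y z = c3) ->
  eqs k1 k3 f2 V1 V2 V3.
Proof.
  intros Hk1 Hk3 Hf Hf' Hnz HF0 [k [Hk [HK [c1 [c2 [c3 [c4 H]]]]]]].
  assert (E1 : V1 = fun x y z => c1 * exp (sqrt (- k) * y) + c2 * exp (- (sqrt (- k) * y))) by ext3 H.
  assert (E2 : V2 = fun x y z => k1 * (Derive f2 x / (f2 x) ^ 2)
                   * (/ sqrt (- k) * (c1 * exp (sqrt (- k) * y) - c2 * exp (- (sqrt (- k) * y))) + c3)
                 + (c3 * k * F0 x + c4) / f2 x) by ext3 H.
  assert (E3 : V3 = fun x y z => c3) by ext3 H.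
  subst V1 V2 V3. clear H.
  assert (Hs : sqrt (- k) * sqrt (- k) = - k) by (apply sqrt_sqrt; lra).
  assert (Hs0 : 0 < sqrt (- k)) by (apply sqrt_lt_R0; lra).
  set (s := sqrt (- k)) in *. clearbody s.
  assert (Hk' : k = - (s * s)) by lra. subst k. clear Hs.
  intros x y z. cbv beta. pose proof (HK x) as HKx. revert HKx. repeat comp_D. intro HKx.
  specialize (Hnz x).
  try rewrite (isD_eta _ _ _ (HF0 x)).
  rewrite ?(isD_eta _ _ _ (Derive_correct _ _ (Hf x))) in HKx |- *.
  rewrite ?(isD_eta _ _ _ (Derive_correct _ _ (Hf' x))) in HKx |- *.
  assert (EDD : Derive (Derive f2) x = (- (s * s) * f2 x ^ 4 / k1 ^ 2 + Derive f2 x * Derive f2 x) / f2 x).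
  { rewrite <- HKx. feq; field; auto. }
  try rewrite EDD.
  pose proof (exp_pos (s * y)). pose proof (exp_pos (- (s * y))).
  repeat split; feq; field; repeat split; auto; lra.
Qed.

Theorem mainTheorem11 (k1 k3 : R) (f2 F0 : R -> R) (V1 V2 V3 : fn3) :
  k1 <> 0 -> k3 <> 0 ->
  smooth1 f2 -> (forall x, f2 x <> 0) ->
  (forall x, is_derive F0 x (- (f2 x) ^ 2 / k1)) ->
  smooth3 V1 -> smooth3 V2 -> smooth3 V3 ->
  (Killing (metric_g k1 k3 f2) (frame_field k1 k3 f2 V1 V2 V3) <->
   (* (i) *)
   (exists c1 c2 : R, forall x y z,
      V1 x y z = 0 /\ V2 x y z = c1 / f2 x /\ V3 x y z = c2)
   \/
   (* (ii) *)
   (exists k2 : R, (forall x, f2 x = k2) /\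
    exists c1 c2 c3 c4 c5 c6 : R, forall x y z,
      V1 x y z = c1 * y + c2 * z + c3 /\
      V2 x y z = - (c1 * k2 / k1) * x - c4 * k2 * z + c5 /\
      V3 x y z = - (c2 * k3 / k1) * x + c4 * k3 * y + c6)
   \/
   (* (iii) *)
   (exists a1 a2 : R, a1 <> 0 /\ a2 <> 0 /\ (forall x, f2 x = a1 * exp (a2 * x)) /\
    exists c1 c2 c3 c4 : R, forall x y z,
      V1 x y z = c1 * y + c2 /\
      V2 x y z = k1 * (Derive f2 x / (f2 x) ^ 2) * (c1 / 2 * y ^ 2 + c2 * y + c3)
                 + (c1 * F0 x + c4) / f2 x /\
      V3 x y z = c3)
   \/
   (* (iv) *)
   (exists k : R, 0 < k /\
    (forall x, k1 ^ 2 / (f2 x) ^ 2 * Derive (fun t => Derive f2 t / f2 t) x = k) /\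
    exists c1 c2 c3 c4 : R, forall x y z,
      V1 x y z = c1 * cos (sqrt k * y) + c2 * sin (sqrt k * y) /\
      V2 x y z = k1 * (Derive f2 x / (f2 x) ^ 2)
                   * (/ sqrt k * (c1 * sin (sqrt k * y) - c2 * cos (sqrt k * y)) + c3)
                 + (c3 * k * F0 x + c4) / f2 x /\
      V3 x y z = c3)
   \/
   (* (v) *)
   (exists k : R, k < 0 /\
    (forall x, k1 ^ 2 / (f2 x) ^ 2 * Derive (fun t => Derive f2 t / f2 t) x = k) /\
    exists c1 c2 c3 c4 : R, forall x y z,
      V1 x y z = c1 * exp (sqrt (- k) * y) + c2 * exp (- (sqrt (- k) * y)) /\
      V2 x y z = k1 * (Derive f2 x / (f2 x) ^ 2)
                   * (/ sqrt (- k) * (c1 * exp (sqrt (- k) * y) - c2 * exp (- (sqrt (- k) * y))) + c3)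
                 + (c3 * k * F0 x + c4) / f2 x /\
      V3 x y z = c3)).
Proof.
  intros Hk1 Hk3 Hsm Hnz HF0 H1 H2 H3.
  pose proof (ex_f2 _ Hsm) as Hf. pose proof (ex_f2' _ Hsm) as Hf'.
  rewrite (killing_iff k1 k3 f2 V1 V2 V3 Hk1 Hk3 Hf Hnz).
  split.
  - intro HE. change (RHS k1 k3 f2 F0 V1 V2 V3).
    apply forward; auto; apply sm_ex; auto.
  - intros [H|[H|[H|[H|H]]]].
    + apply backward_i; auto.
    + apply backward_ii; auto.
    + apply (backward_iii k1 k3 f2 F0); auto.
    + apply (backward_iv k1 k3 f2 F0); auto.
    + apply (backward_v k1 k3 f2 F0); auto.
Qed.
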